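(* Let $A$ be a complex $3$-dimensional binary associative superalgebra of type $(2,1)$. Then either $A$ is associative, or $A$ is isomorphic to $\mathbf{R}_{28}$ or to $\mathbf{R}_{30}$.
   Context: All algebras are over $\mathbb{C}$. A superalgebra is a $\mathbb{Z}_2$-graded algebra $A=A_0\oplus A_1$ with $A_iA_j\subseteq A_{i+j \bmod 2}$; $|x|\in\{0,1\}$ is the degree of a homogeneous $x$. It has type $(n,m)$ if $\dim A_0=n$, $\dim A_1=m$. Isomorphisms are grading-preserving algebra isomorphisms. The associator is $(x,y,z)=(xy)z-x(yz)$; a superalgebra is associative if $(x,y,z)=0$ for all $x,y,z$. A binary associative superalgebra is a superalgebra satisfying $(x,y,z)=-(-1)^{|y||z|}(x,z,y)=-(-1)^{|x||y|}(y,x,z)$ for all homogeneous $x,y,z$. Superalgebras of type $(2,1)$, in basis $e_1,e_2$ (even), $f_1$ (odd), listed by nonzero products (unlisted products are zero): $\mathbf{R}_{28}$: $e_1e_1=e_1,\ e_2e_1=e_2,\ e_1f_1=f_1,\ f_1f_1=e_2$; $\mathbf{R}_{30}$: $e_1e_1=e_1,\ e_1e_2=e_2,\ f_1e_1=f_1,\ f_1f_1=e_2$. *)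

(* Defs.v *)
From mathcomp Require Import all_boot all_algebra.
From mathcomp Require Import complex.
From mathcomp Require Import Rstruct.
Set Implicit Arguments.
Unset Strict Implicit.
Unset Printing Implicit Defensive.
Import GRing.Theory.
Local Open Scope ring_scope.

Definition C : numClosedFieldType := Rdefinitions.R[i].

(* Underlying vector space C^3, coordinates w.r.t. the basis e1, e2 (even), f1 (odd). *)
Definition V := 'rV[C]_3.
Definition ie1 : 'I_3 := @Ordinal 3 0 erefl.
Definition ie2 : 'I_3 := @Ordinal 3 1 erefl.
Definition if1 : 'I_3 := @Ordinal 3 2 erefl.

(* Structure constants: c i j k = coefficient of basis vector k in (b_i b_j). *)
Definition sconst := 'I_3 -> 'I_3 -> 'I_3 -> C.

Definition smul (c : sconst) (u v : V) : V :=
  \row_k \sum_(i < 3) \sum_(j < 3) u 0 i * v 0 j * c i j k.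

(* v is homogeneous of degree b (false = even = span(e1,e2), true = odd = span(f1)). *)
Definition homog (b : bool) (v : V) : Prop :=
  if b then v 0 ie1 = 0 /\ v 0 ie2 = 0 else v 0 if1 = 0.

Definition graded (c : sconst) : Prop :=
  forall (a b : bool) (u v : V), homog a u -> homog b v -> homog (a (+) b) (smul c u v).

Definition assoc (c : sconst) (x y z : V) : V :=
  smul c (smul c x y) z - smul c x (smul c y z).

Definition associative_sa (c : sconst) : Prop :=
  forall x y z : V, assoc c x y z = 0.

(* (-1)^(|x||y|) *)
Definition sgn (b : bool) : C := if b then -1 else 1.

Definition binary_associative (c : sconst) : Prop :=
  forall (a b d : bool) (x y z : V), homog a x -> homog b y -> homog d z ->
    assoc c x y z = - (sgn (b && d)) *: assoc c x z y /\
    assoc c x y z = - (sgn (a && b)) *: assoc c y x z.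

(* Grading-preserving algebra isomorphism (row-vector convention: v |-> v *m P). *)
Definition sa_iso (c c' : sconst) : Prop :=
  exists P : 'M[C]_3, P \in unitmx /\
    (forall (b : bool) (v : V), homog b v -> homog b (v *m P)) /\
    (forall u v : V, smul c u v *m P = smul c' (u *m P) (v *m P)).

(* R28: e1e1=e1, e2e1=e2, e1f1=f1, f1f1=e2. *)
Definition R28 : sconst := fun i j k =>
  match nat_of_ord i, nat_of_ord j, nat_of_ord k with
  | 0, 0, 0 => 1
  | 1, 0, 1 => 1
  | 0, 2, 2 => 1
  | 2, 2, 1 => 1
  | _, _, _ => 0
  end.

(* R30: e1e1=e1, e1e2=e2, f1e1=f1, f1f1=e2. *)
Definition R30 : sconst := fun i j k =>
  match nat_of_ord i, nat_of_ord j, nat_of_ord k with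
  | 0, 0, 0 => 1
  | 0, 1, 1 => 1
  | 2, 0, 2 => 1
  | 2, 2, 1 => 1
  | _, _, _ => 0
  end.

(* Main.v *)
Require Import Defs.
From mathcomp Require Import all_boot all_algebra.
From mathcomp Require Import complex.
From mathcomp Require Import Rstruct.
From mathcomp Require Import ring.
From Stdlib Require Import FunctionalExtensionality.
Set Implicit Arguments. Unset Strict Implicit. Unset Printing Implicit Defensive.
Import GRing.Theory Num.Theory.
Local Open Scope ring_scope.

Definition ev (i : 'I_3) : V := delta_mx 0 i.

Lemma smulDl c u v w : smul c (u + v) w = smul c u w + smul c v w.
Proof.
apply/rowP => k; rewrite !mxE -big_split; apply: eq_bigr => i _.
rewrite -big_split; apply: eq_bigr => j _; rewrite !mxE /=; ring.
Qed.
Lemma smulDr c u v w : smul c w (u + v) = smul c w u + smul c w v.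
Proof.
apply/rowP => k; rewrite !mxE -big_split; apply: eq_bigr => i _.
rewrite -big_split; apply: eq_bigr => j _; rewrite !mxE /=; ring.
Qed.
Lemma smulZl c a u w : smul c (a *: u) w = a *: smul c u w.
Proof.
apply/rowP => k; rewrite !mxE mulr_sumr; apply: eq_bigr => i _.
rewrite mulr_sumr; apply: eq_bigr => j _; rewrite !mxE /=; ring.
Qed.
Lemma smulZr c a u w : smul c w (a *: u) = a *: smul c w u.
Proof.
apply/rowP => k; rewrite !mxE mulr_sumr; apply: eq_bigr => i _.
rewrite mulr_sumr; apply: eq_bigr => j _; rewrite !mxE /=; ring.
Qed.
Lemma smul0l c w : smul c 0 w = 0.
Proof. by apply/rowP => k; rewrite !mxE big1 // => i _; rewrite big1 // => j _; rewrite mxE !mul0r. Qed.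
Lemma smul0r c w : smul c w 0 = 0.
Proof. by apply/rowP => k; rewrite !mxE big1 // => i _; rewrite big1 // => j _; rewrite mxE mulr0 mul0r. Qed.

Lemma assocD1 c u v y z : assoc c (u + v) y z = assoc c u y z + assoc c v y z.
Proof. by rewrite /assoc !smulDl opprD addrACA. Qed.
Lemma assocD2 c u v y z : assoc c y (u + v) z = assoc c y u z + assoc c y v z.
Proof. by rewrite /assoc !smulDl !smulDr smulDl opprD addrACA. Qed.
Lemma assocD3 c u v y z : assoc c y z (u + v) = assoc c y z u + assoc c y z v.
Proof. by rewrite /assoc !smulDr opprD addrACA. Qed.
Lemma assocZ1 c a u y z : assoc c (a *: u) y z = a *: assoc c u y z.
Proof. by rewrite /assoc !smulZl scalerBr. Qed.
Lemma assocZ2 c a u y z : assoc c y (a *: u) z = a *: assoc c y u z.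
Proof. by rewrite /assoc !smulZl !smulZr smulZl scalerBr. Qed.
Lemma assocZ3 c a u y z : assoc c y z (a *: u) = a *: assoc c y z u.
Proof. by rewrite /assoc !smulZr scalerBr. Qed.

Lemma assoc01 c y z : assoc c 0 y z = 0.
Proof. by rewrite /assoc !smul0l subrr. Qed.
Lemma assoc02 c y z : assoc c y 0 z = 0.
Proof. by rewrite /assoc smul0r smul0l smul0r subrr. Qed.
Lemma assoc03 c y z : assoc c y z 0 = 0.
Proof. by rewrite /assoc !smul0r subrr. Qed.

Lemma basis_assoc c : (forall i j l, assoc c (ev i) (ev j) (ev l) = 0) -> associative_sa c.
Proof.
move=> H x y z.
rewrite (row_sum_delta x) (big_morph _ (fun u v => assocD1 c u v y z) (assoc01 c y z)).
apply: big1 => i _; rewrite assocZ1.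
rewrite (row_sum_delta y) (big_morph _ (fun u v => assocD2 c u v ('e_i) z) (assoc02 c _ z)).
rewrite big1 ?scaler0 // => j _; rewrite assocZ2.
rewrite (row_sum_delta z) (big_morph _ (fun u v => assocD3 c u v ('e_i) ('e_j)) (assoc03 c _ _)).
rewrite big1 ?scaler0 // => l _; rewrite assocZ3.
by have := H i j l; rewrite /ev => ->; rewrite scaler0.
Qed.

Lemma ord3 (i : 'I_3) : i = ie1 \/ i = ie2 \/ i = if1.
Proof. case: i => [[|[|[|//]]] Hi]; [left|right;left|right;right]; exact: val_inj. Qed.

Lemma l0 : (ord0 : 'I_3) = ie1. Proof. exact: val_inj. Qed.
Lemma l1 : lift (ord0 : 'I_3) (ord0 : 'I_2) = ie2. Proof. exact: val_inj. Qed.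
Lemma l2 : lift (ord0 : 'I_3) (lift (ord0 : 'I_2) (ord0 : 'I_1)) = if1. Proof. exact: val_inj. Qed.

Ltac expand := rewrite /assoc /smul /ev;
  repeat (rewrite !mxE || rewrite !big_ord_recl || rewrite !big_ord0);
  rewrite ?l2 ?l1 ?l0 /=.

Lemma smul_ev c i j k : smul c (ev i) (ev j) 0 k = c i j k.
Proof.
case: (ord3 i) => [->|[->|->]]; case: (ord3 j) => [->|[->|->]];
expand; ring.
Qed.

Lemma hom_ev (i : 'I_3) : homog (i == if1) (ev i).
Proof. by case: (ord3 i) => [->|[->|->]]; rewrite /homog /ev !mxE. Qed.

Lemma homogP b (v : V) k : homog b v -> (k == if1) != b -> v 0 k = 0.
Proof. case: (ord3 k) => [->|[->|->]]; case: b; rewrite /homog /=; intuition; discriminate. Qed.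

Lemma gzero c : graded c -> forall i j k, (k == if1) != ((i == if1) (+) (j == if1)) -> c i j k = 0.
Proof.
move=> Hg i j k H; rewrite -(smul_ev c i j k).
exact: homogP (Hg _ _ _ _ (hom_ev i) (hom_ev j)) H.
Qed.

Definition mkc (a000 a001 a010 a011 a100 a101 a110 a111 b0 b1 r0 r1 d0 d1 : C) : sconst :=
  fun i j k => match nat_of_ord i, nat_of_ord j, nat_of_ord k with
  | 0,0,0 => a000 | 0,0,1 => a001 | 0,1,0 => a010 | 0,1,1 => a011
  | 1,0,0 => a100 | 1,0,1 => a101 | 1,1,0 => a110 | 1,1,1 => a111
  | 0,2,2 => b0 | 1,2,2 => b1 | 2,0,2 => r0 | 2,1,2 => r1
  | 2,2,0 => d0 | 2,2,1 => d1 | _,_,_ => 0 end.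

Lemma graded_mkc c : graded c -> c = mkc (c ie1 ie1 ie1) (c ie1 ie1 ie2) (c ie1 ie2 ie1) (c ie1 ie2 ie2)
  (c ie2 ie1 ie1) (c ie2 ie1 ie2) (c ie2 ie2 ie1) (c ie2 ie2 ie2) (c ie1 if1 if1) (c ie2 if1 if1)
  (c if1 ie1 if1) (c if1 ie2 if1) (c if1 if1 ie1) (c if1 if1 ie2).
Proof.
move=> Hg; apply: functional_extensionality => i.
apply: functional_extensionality => j; apply: functional_extensionality => k.
case: (ord3 i) => [->|[->|->]]; case: (ord3 j) => [->|[->|->]];
case: (ord3 k) => [->|[->|->]]; rewrite /mkc //=; exact: gzero.
Qed.

Lemma diff_tac (L R X E : C) : L - R = X * E -> E = 0 -> L = R.
Proof. by move=> h e; apply/eqP; rewrite -subr_eq0 h e mulr0. Qed.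

Definition P28 (b0 b1 e0 e1 : C) : 'M[C]_3 := \matrix_(i, j)
  match nat_of_ord i, nat_of_ord j with
  | 0,0 => b0 | 0,1 => e0 | 1,0 => b1 | 1,1 => e1 | 2,2 => 1 | _,_ => 0 end.
Definition Q28 (b0 b1 e0 e1 : C) : 'M[C]_3 := \matrix_(i, j)
  match nat_of_ord i, nat_of_ord j with
  | 0,0 => e1 / (b0*e1 - b1*e0) | 0,1 => - e0 / (b0*e1 - b1*e0)
  | 1,0 => - b1 / (b0*e1 - b1*e0) | 1,1 => b0 / (b0*e1 - b1*e0) | 2,2 => 1 | _,_ => 0 end.

Lemma det_nz (b0 b1 d0 d1 e0 e1 : C) : b0*d0 + b1*d1 = 0 -> e0*d0 + e1*d1 = 1 -> (b0 != 0) || (b1 != 0) ->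
  b0*e1 - b1*e0 != 0.
Proof.
move=> H1 H2 H3; apply/negP => /eqP H; move: H3.
have -> : b0 = 0.
  transitivity (e0 * (b0*d0+b1*d1) + d1 * (b0*e1 - b1*e0) + b0 * (1 - (e0*d0+e1*d1))); first ring.
  by rewrite H1 H H2 subrr; ring.
have -> : b1 = 0.
  transitivity (e1*(b0*d0+b1*d1) - d0*(b0*e1 - b1*e0) + b1*(1 - (e0*d0+e1*d1))); first ring.
  by rewrite H1 H H2 subrr; ring.
by rewrite eqxx.
Qed.



Lemma iso28 b0 b1 d0 d1 e0 e1 : b0*d0 + b1*d1 = 0 -> e0*d0 + e1*d1 = 1 -> (b0 != 0) || (b1 != 0) ->
  sa_iso (mkc b0 0 b1 0 0 b0 0 b1 b0 b1 0 0 d0 d1) R28.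
Proof.
move=> H1 H2 H3; have D := det_nz H1 H2 H3.
exists (P28 b0 b1 e0 e1); split; [|split].
- have [] // := @mulmx1_unit _ _ (P28 b0 b1 e0 e1) (Q28 b0 b1 e0 e1).
  apply/matrixP => i j; case: (ord3 i) => [->|[->|->]]; case: (ord3 j) => [->|[->|->]];
  rewrite /P28 /Q28; expand; field; first [exact: D | done].
- move=> [] v; rewrite /homog /P28; expand.
  + by case=> -> ->; split; ring.
  + by move=> ->; ring.
- move=> u v; apply/rowP => k; case: (ord3 k) => [->|[->|->]]; rewrite /P28 /R28 /mkc; expand.
  + apply: (diff_tac (X := u 0 if1 * v 0 if1) (E := b0*d0+b1*d1)); [ring | exact: H1].
  + apply: (diff_tac (X := u 0 if1 * v 0 if1) (E := e0*d0+e1*d1 - 1)); [ring | by rewrite H2 subrr].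
  + ring.
Qed.

Lemma iso30 r0 r1 d0 d1 e0 e1 : r0*d0 + r1*d1 = 0 -> e0*d0 + e1*d1 = 1 -> (r0 != 0) || (r1 != 0) ->
  sa_iso (mkc r0 0 0 r0 r1 0 0 r1 0 0 r0 r1 d0 d1) R30.
Proof.
move=> H1 H2 H3; have D := det_nz H1 H2 H3.
exists (P28 r0 r1 e0 e1); split; [|split].
- have [] // := @mulmx1_unit _ _ (P28 r0 r1 e0 e1) (Q28 r0 r1 e0 e1).
  apply/matrixP => i j; case: (ord3 i) => [->|[->|->]]; case: (ord3 j) => [->|[->|->]];
  rewrite /P28 /Q28; expand; field; first [exact: D | done].
- move=> [] v; rewrite /homog /P28; expand.
  + by case=> -> ->; split; ring.
  + by move=> ->; ring.
- move=> u v; apply/rowP => k; case: (ord3 k) => [->|[->|->]]; rewrite /P28 /R30 /mkc; expand.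
  + apply: (diff_tac (X := u 0 if1 * v 0 if1) (E := r0*d0+r1*d1)); [ring | exact: H1].
  + apply: (diff_tac (X := u 0 if1 * v 0 if1) (E := e0*d0+e1*d1 - 1)); [ring | by rewrite H2 subrr].
  + ring.
Qed.
Record Hyps (a000 a001 a010 a011 a100 a101 a110 a111 b0 b1 r0 r1 d0 d1 : C) : Prop := MkHyps {
 hl00 : a000*b0 + a001*b1 = b0*b0; hl01 : a010*b0 + a011*b1 = b0*b1;
 hl10 : a100*b0 + a101*b1 = b1*b0; hl11 : a110*b0 + a111*b1 = b1*b1;
 hr00 : a000*r0 + a001*r1 = r0*r0; hr01 : a010*r0 + a011*r1 = r0*r1;
 hr10 : a100*r0 + a101*r1 = r1*r0; hr11 : a110*r0 + a111*r1 = r1*r1;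
 hed00 : d0*a000 + d1*a010 = r0*d0; hed01 : d0*a001 + d1*a011 = r0*d1;
 hed10 : d0*a100 + d1*a110 = r1*d0; hed11 : d0*a101 + d1*a111 = r1*d1;
 hde00 : d0*a000 + d1*a100 = b0*d0; hde01 : d0*a001 + d1*a101 = b0*d1;
 hde10 : d0*a010 + d1*a110 = b1*d0; hde11 : d0*a011 + d1*a111 = b1*d1;
 ha1 : a110*a010 + a111*a110 = a110*a100 + a111*a110;
 ha0 : a001*a101 + a000*a001 = a001*a011 + a000*a001 }.

Definition Conc28 (a000 a001 a010 a011 a100 a101 a110 a111 b0 b1 r0 r1 d0 d1 : C) : Prop :=
  r0 = 0 /\ r1 = 0 /\ b0*d0 + b1*d1 = 0 /\ ((b0 != 0) || (b1 != 0)) /\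
  a000 = b0 /\ a001 = 0 /\ a010 = b1 /\ a011 = 0 /\ a100 = 0 /\ a101 = b0 /\ a110 = 0 /\ a111 = b1.
Definition Conc30 (a000 a001 a010 a011 a100 a101 a110 a111 b0 b1 r0 r1 d0 d1 : C) : Prop :=
  b0 = 0 /\ b1 = 0 /\ r0*d0 + r1*d1 = 0 /\ ((r0 != 0) || (r1 != 0)) /\
  a000 = r0 /\ a001 = 0 /\ a010 = 0 /\ a011 = r0 /\ a100 = r1 /\ a101 = 0 /\ a110 = 0 /\ a111 = r1.

Lemma ringeq (L R L' R' : C) : L = R -> L' = L -> R = R' -> L' = R'.
Proof. by move=> h -> <-. Qed.
Lemma from_eq (L R X : C) : L = R -> X = L - R -> X = 0.
Proof. by move=> -> ->; rewrite subrr. Qed.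

Lemma solve1 (d x y z : C) : d != 0 -> d * x + y = z -> x = (z - y) / d.
Proof. by move=> dn <-; field. Qed.

Lemma key28 a000 a001 a010 a011 a100 a101 a110 a111 b0 b1 r0 r1 d0 d1 :
  Hyps a000 a001 a010 a011 a100 a101 a110 a111 b0 b1 r0 r1 d0 d1 ->
  r0 = 0 -> r1 = 0 -> d0 != 0 -> b1 != 0 -> b0*d0 + b1*d1 = 0 ->
  a000 = b0 /\ a001 = 0 /\ a010 = b1 /\ a011 = 0 /\ a100 = 0 /\ a101 = b0 /\ a110 = 0 /\ a111 = b1.
Proof.
move=> H R0 R1 D0 B1 Ld; subst r0 r1.
have e100 := solve1 D0 (hed10 H). have e101 := solve1 D0 (hed11 H).
have e000 := solve1 D0 (hde00 H). have e001 := solve1 D0 (hde01 H).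
have e010 := solve1 D0 (hde10 H). have e011 := solve1 D0 (hde11 H).
have eb0 : b0 = (0 - b1 * d1) / d0 by apply: (solve1 D0); rewrite mulrC.
have Ha1 := ha1 H; have Hl11 := hl11 H.
subst a000 a001 a010 a011 a100 a101 b0.
have E : a110 * b1 = 0 by apply: (from_eq Ha1); field.
move/eqP: E; rewrite mulf_eq0 (negbTE B1) orbF => /eqP E; subst a110.
have E : (a111 - b1) * b1 = 0 by apply: (from_eq Hl11); field.
move/eqP: E; rewrite mulf_eq0 (negbTE B1) orbF subr_eq0 => /eqP E; subst a111.
by split; [|split; [|split; [|split; [|split; [|split; [|split]]]]]]; field.
Qed.

Lemma Hyps_op a000 a001 a010 a011 a100 a101 a110 a111 b0 b1 r0 r1 d0 d1 :
  Hyps a000 a001 a010 a011 a100 a101 a110 a111 b0 b1 r0 r1 d0 d1 ->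
  Hyps a000 a001 a100 a101 a010 a011 a110 a111 r0 r1 b0 b1 d0 d1.
Proof.
case=> h1 h2 h3 h4 h5 h6 h7 h8 h9 h10 h11 h12 h13 h14 h15 h16 h17 h18; constructor;
  first [ fail
        | match goal with h : _ |- _ => first [eapply (ringeq h); ring | eapply (ringeq (esym h)); ring] end ].
Qed.

Lemma Hyps_swap a000 a001 a010 a011 a100 a101 a110 a111 b0 b1 r0 r1 d0 d1 :
  Hyps a000 a001 a010 a011 a100 a101 a110 a111 b0 b1 r0 r1 d0 d1 ->
  Hyps a111 a110 a101 a100 a011 a010 a001 a000 b1 b0 r1 r0 d1 d0.
Proof.
case=> h1 h2 h3 h4 h5 h6 h7 h8 h9 h10 h11 h12 h13 h14 h15 h16 h17 h18; constructor;
  match goal with h : _ |- _ => first [eapply (ringeq h); ring | eapply (ringeq (esym h)); ring] end.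
Qed.

Lemma key30 a000 a001 a010 a011 a100 a101 a110 a111 b0 b1 r0 r1 d0 d1 :
  Hyps a000 a001 a010 a011 a100 a101 a110 a111 b0 b1 r0 r1 d0 d1 ->
  b0 = 0 -> b1 = 0 -> d0 != 0 -> r1 != 0 -> r0*d0 + r1*d1 = 0 ->
  a000 = r0 /\ a001 = 0 /\ a010 = 0 /\ a011 = r0 /\ a100 = r1 /\ a101 = 0 /\ a110 = 0 /\ a111 = r1.
Proof.
move=> H B0 B1 D0 R1 Ld.
have [? [? [? [? [? [? [? ?]]]]]]] := key28 (Hyps_op H) B0 B1 D0 R1 Ld.
by do !split.
Qed.

Lemma mul_eq0_l (x y : C) : x != 0 -> x * y = 0 -> y = 0.
Proof. by move=> xn /eqP; rewrite mulf_eq0 (negbTE xn) /= => /eqP. Qed.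

Lemma core a000 a001 a010 a011 a100 a101 a110 a111 b0 b1 r0 r1 d0 d1 :
  Hyps a000 a001 a010 a011 a100 a101 a110 a111 b0 b1 r0 r1 d0 d1 ->
  d0 != 0 -> (b0 != r0) || (b1 != r1) ->
  Conc28 a000 a001 a010 a011 a100 a101 a110 a111 b0 b1 r0 r1 d0 d1 \/
  Conc30 a000 a001 a010 a011 a100 a101 a110 a111 b0 b1 r0 r1 d0 d1.
Proof.
move=> H D0 NE.
have E1 : d0 * ((b0*d0 + b1*d1) - (r0*d0 + r1*d1)) = 0.
  transitivity (d0*((d0*a000 + d1*a010) - r0*d0) + d1*((d0*a100 + d1*a110) - r1*d0)
     - d0*((d0*a000 + d1*a100) - b0*d0) - d1*((d0*a010 + d1*a110) - b1*d0)); first ring.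
  by rewrite (hed00 H) (hed10 H) (hde00 H) (hde10 H) !subrr; ring.
have {}E1 := mul_eq0_l D0 E1.
have X0 : (b0 - r0) * (b0*d0 + b1*d1) = 0.
  transitivity (d0*(b0*b0 - (a000*b0 + a001*b1)) + d1*(b0*b1 - (a010*b0 + a011*b1))
     - b0*(r0*d0 - (d0*a000 + d1*a010)) - b1*(r0*d1 - (d0*a001 + d1*a011))); first ring.
  by rewrite (hl00 H) (hl01 H) (hed00 H) (hed01 H) !subrr; ring.
have X1 : (b1 - r1) * (b0*d0 + b1*d1) = 0.
  transitivity (d0*(b1*b0 - (a100*b0 + a101*b1)) + d1*(b1*b1 - (a110*b0 + a111*b1))
     - b0*(r1*d0 - (d0*a100 + d1*a110)) - b1*(r1*d1 - (d0*a101 + d1*a111))); first ring.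
  by rewrite (hl10 H) (hl11 H) (hed10 H) (hed11 H) !subrr; ring.
have Ll : b0*d0 + b1*d1 = 0.
  case/orP: NE => NE.
  - by apply: (mul_eq0_l _ X0); rewrite subr_eq0.
  - by apply: (mul_eq0_l _ X1); rewrite subr_eq0.
have Lr : r0*d0 + r1*d1 = 0.
  by move/eqP: E1; rewrite Ll sub0r oppr_eq0 => /eqP.
have Yb : b1 * ((a111*d0 - a110*d1) - d0*b1) = 0.
  transitivity (d0*((a110*b0 + a111*b1) - b1*b1) - a110*(b0*d0 + b1*d1)); first ring.
  by rewrite (hl11 H) Ll subrr; ring.
have Yr : r1 * ((a111*d0 - a110*d1) - d0*r1) = 0.
  transitivity (d0*((a110*r0 + a111*r1) - r1*r1) - a110*(r0*d0 + r1*d1)); first ring.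
  by rewrite (hr11 H) Lr subrr; ring.
have zero0 : forall x y : C, x*d0 + y*d1 = 0 -> y = 0 -> x = 0.
  move=> x y h hy; move: h; rewrite hy mul0r addr0 => /eqP.
  by rewrite mulf_eq0 (negbTE D0) orbF => /eqP.
case: (eqVneq b1 0) => B1.
- have B0 := zero0 _ _ Ll B1.
  have R1 : r1 != 0.
    apply/negP => /eqP R1; have R0 := zero0 _ _ Lr R1.
    by move: NE; rewrite B0 B1 R0 R1 eqxx.
  right; have [? [? [? [? [? [? [? ?]]]]]]] := key30 H B0 B1 D0 R1 Lr.
  do !split => //; by rewrite R1 orbT.
- case: (eqVneq r1 0) => R1.
  + have R0 := zero0 _ _ Lr R1.
    left; have [? [? [? [? [? [? [? ?]]]]]]] := key28 H R0 R1 D0 B1 Ll.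
    do !split => //; by rewrite B1 orbT.
  + exfalso.
    have e1 := mul_eq0_l B1 Yb; have e2 := mul_eq0_l R1 Yr.
    have E : d0 * (b1 - r1) = 0.
      transitivity ((a111*d0 - a110*d1 - d0*r1) - (a111*d0 - a110*d1 - d0*b1)); first ring.
      by rewrite e1 e2 subrr.
    have {}E := mul_eq0_l D0 E; move/eqP: E; rewrite subr_eq0 => /eqP E.
    have E' : b0 - r0 = 0.
      apply: zero0 (b1 - r1) _ _; last by rewrite E subrr.
      transitivity ((b0*d0 + b1*d1) - (r0*d0 + r1*d1)); first ring.
      by rewrite Ll Lr subrr.
    have b0r : b0 = r0 by apply/eqP; rewrite -subr_eq0 E'.
    by move: NE; rewrite b0r E !eqxx.
Qed.

Lemma core2 a000 a001 a010 a011 a100 a101 a110 a111 b0 b1 r0 r1 d0 d1 :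
  Hyps a000 a001 a010 a011 a100 a101 a110 a111 b0 b1 r0 r1 d0 d1 ->
  (d0 != 0) || (d1 != 0) -> (b0 != r0) || (b1 != r1) ->
  Conc28 a000 a001 a010 a011 a100 a101 a110 a111 b0 b1 r0 r1 d0 d1 \/
  Conc30 a000 a001 a010 a011 a100 a101 a110 a111 b0 b1 r0 r1 d0 d1.
Proof.
move=> H /orP [D0|D1] NE; first exact: core H D0 NE.
have NE' : (b1 != r1) || (b0 != r0) by rewrite orbC.
case: (core (Hyps_swap H) D1 NE') => [[h1 [h2 [h3 [h4 [h5 [h6 [h7 [h8 [h9 [h10 [h11 h12]]]]]]]]]]]|[h1 [h2 [h3 [h4 [h5 [h6 [h7 [h8 [h9 [h10 [h11 h12]]]]]]]]]]]].
- left; do !split => //; first by rewrite addrC.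
  by rewrite orbC.
- right; do !split => //; first by rewrite addrC.
  by rewrite orbC.
Qed.
Lemma rel1s c : binary_associative c -> forall a b d x y z, homog a x -> homog b y -> homog d z ->
  b && d = false -> assoc c x y z = - assoc c x z y.
Proof. by move=> Hb a b d x y z hx hy hz E; have [-> _] := Hb a b d x y z hx hy hz; rewrite E /sgn scaleN1r. Qed.
Lemma rel2s c : binary_associative c -> forall a b d x y z, homog a x -> homog b y -> homog d z ->
  a && b = false -> assoc c x y z = - assoc c y x z.
Proof. by move=> Hb a b d x y z hx hy hz E; have [_ ->] := Hb a b d x y z hx hy hz; rewrite E /sgn scaleN1r. Qed.

Lemma vneg (v : V) : v = - v -> v = 0.
Proof.
move=> h; have : (2%:R : C) *: v = 0 by rewrite scaler_nat mulr2n {1}h addNr.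
by move/eqP; rewrite scaler_eq0 pnatr_eq0 /= => /eqP.
Qed.

Lemma two_nz : (2%:R : C) != 0. Proof. by rewrite pnatr_eq0. Qed.

Lemma alt c : binary_associative c -> forall x y, homog false x -> homog false y ->
  [/\ assoc c x x y = 0, assoc c x y y = 0 & assoc c x y x = 0].
Proof.
move=> Hb x y hx hy.
have e1 : assoc c x y y = 0 by apply: vneg; exact: (rel1s Hb hx hy hy).
have e2 : assoc c x x y = 0 by apply: vneg; exact: (rel2s Hb hx hx hy).
have e3 : assoc c y x x = 0 by apply: vneg; exact: (rel1s Hb hy hx hx).
by split=> //; rewrite (rel2s Hb hx hy hx) // e3 oppr0.
Qed.

Lemma evE (i : 'I_3) : i != if1 -> i = ie1 \/ i = ie2.
Proof. by case: (ord3 i) => [->|[->|->]] h; [left|right|move: h; rewrite eqxx]. Qed.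

Lemma fromv (U W : V) k (L R : C) : U = W -> (L - R = (U - W) 0 k) \/ (R - L = (U - W) 0 k) -> L = R.
Proof.
move=> -> [h|h]; apply/eqP; rewrite -subr_eq0; [rewrite h | rewrite -opprB h];
  by rewrite subrr mxE ?oppr0.
Qed.

Lemma exists_beta (d0 d1 : C) : (d0 != 0) || (d1 != 0) -> exists e0 e1 : C, e0*d0 + e1*d1 = 1.
Proof.
case/orP => D.
- by exists d0^-1, 0; rewrite mulVf // mul0r addr0.
- by exists 0, d1^-1; rewrite mulVf // mul0r add0r.
Qed.

Lemma oppE (A : V) k : (- A) 0 k = - A 0 k.
Proof. by rewrite !mxE. Qed.
Lemma subE (A B : V) k : (A - B) 0 k = A 0 k - B 0 k.
Proof. by rewrite !mxE. Qed.

Lemma smul_r c x l k : smul c x (ev l) 0 k = \sum_m x 0 m * c m l k.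
Proof.
by case: (ord3 l) => [->|[->|->]]; rewrite /smul /ev; repeat (rewrite !mxE || rewrite !big_ord_recl || rewrite !big_ord0);
  rewrite ?l2 ?l1 ?l0 /=; ring.
Qed.
Lemma smul_l c y i k : smul c (ev i) y 0 k = \sum_m y 0 m * c i m k.
Proof.
by case: (ord3 i) => [->|[->|->]]; rewrite /smul /ev; repeat (rewrite !mxE || rewrite !big_ord_recl || rewrite !big_ord0);
  rewrite ?l2 ?l1 ?l0 /=; ring.
Qed.

Lemma assoc_basis c i j l k : assoc c (ev i) (ev j) (ev l) 0 k =
  \sum_m c i j m * c m l k - \sum_m c j l m * c i m k.
Proof.
rewrite /assoc subE smul_r smul_l.
by congr (_ - _); apply: eq_bigr => m _; rewrite smul_ev.
Qed.

Ltac bexp := rewrite !assoc_basis !big_ord_recl !big_ord0 ?l2 ?l1 ?l0 /mkc /= ?mxE.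

Lemma Fefe a000 a001 a010 a011 a100 a101 a110 a111 b0 b1 r0 r1 d0 d1 a b : a != if1 -> b != if1 ->
  assoc (mkc a000 a001 a010 a011 a100 a101 a110 a111 b0 b1 r0 r1 d0 d1) (ev a) (ev if1) (ev b) = 0.
Proof.
move=> /evE ha /evE hb; apply/rowP => k.
case: ha => ->; case: hb => ->; case: (ord3 k) => [->|[->|->]]; bexp. all: ring.
Qed.

Lemma Ffef a000 a001 a010 a011 a100 a101 a110 a111 b0 b1 r0 r1 d0 d1 a :
  (d0 == 0) && (d1 == 0) || (b0 == r0) && (b1 == r1) -> a != if1 ->
  assoc (mkc a000 a001 a010 a011 a100 a101 a110 a111 b0 b1 r0 r1 d0 d1) (ev if1) (ev a) (ev if1) = 0.
Proof.
move=> Hc /evE ha; apply/rowP => k.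
by case/orP: Hc => /andP [/eqP -> /eqP ->]; case: ha => ->; case: (ord3 k) => [->|[->|->]];
  bexp; ring.
Qed.

Lemma Ffff a000 a001 a010 a011 a100 a101 a110 a111 b0 b1 r0 r1 d0 d1 :
  (d0 == 0) && (d1 == 0) || (b0 == r0) && (b1 == r1) ->
  assoc (mkc a000 a001 a010 a011 a100 a101 a110 a111 b0 b1 r0 r1 d0 d1) (ev if1) (ev if1) (ev if1) = 0.
Proof.
move=> Hc; apply/rowP => k.
by case/orP: Hc => /andP [/eqP -> /eqP ->]; case: (ord3 k) => [->|[->|->]];
  bexp; ring.
Qed.

Ltac fv E k := apply: (fromv (k := k) E);
  first [left; rewrite subE ?oppE; bexp; ring | right; rewrite subE ?oppE; bexp; ring].

Lemma hf i : i != if1 -> homog false (ev i).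
Proof. by move=> hi; have := hom_ev i; rewrite (negbTE hi). Qed.

Lemma main_mkc a000 a001 a010 a011 a100 a101 a110 a111 b0 b1 r0 r1 d0 d1 :
  binary_associative (mkc a000 a001 a010 a011 a100 a101 a110 a111 b0 b1 r0 r1 d0 d1) ->
  associative_sa (mkc a000 a001 a010 a011 a100 a101 a110 a111 b0 b1 r0 r1 d0 d1) \/
  sa_iso (mkc a000 a001 a010 a011 a100 a101 a110 a111 b0 b1 r0 r1 d0 d1) R28 \/
  sa_iso (mkc a000 a001 a010 a011 a100 a101 a110 a111 b0 b1 r0 r1 d0 d1) R30.
Proof.
move=> Hb.
have Feef : forall i j, i != if1 -> j != if1 ->
    assoc (mkc a000 a001 a010 a011 a100 a101 a110 a111 b0 b1 r0 r1 d0 d1) (ev i) (ev j) (ev if1) = 0.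
  move=> i j hi hj; rewrite (rel1s Hb (hom_ev i) (hom_ev j) (hom_ev if1)); last by rewrite (negbTE hj).
  by rewrite Fefe // oppr0.
have Ffee : forall i j, i != if1 -> j != if1 ->
    assoc (mkc a000 a001 a010 a011 a100 a101 a110 a111 b0 b1 r0 r1 d0 d1) (ev if1) (ev i) (ev j) = 0.
  move=> i j hi hj; rewrite (rel2s Hb (hom_ev if1) (hom_ev i) (hom_ev j)); last by rewrite (negbTE hi).
  by rewrite Fefe // oppr0.
have Eeff : forall i, i != if1 ->
    assoc (mkc a000 a001 a010 a011 a100 a101 a110 a111 b0 b1 r0 r1 d0 d1) (ev i) (ev if1) (ev if1) =
  - assoc (mkc a000 a001 a010 a011 a100 a101 a110 a111 b0 b1 r0 r1 d0 d1) (ev if1) (ev i) (ev if1).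
  by move=> i hi; rewrite (rel2s Hb (hom_ev i) (hom_ev if1) (hom_ev if1)) // (negbTE hi).
have Effe : forall i, i != if1 ->
    assoc (mkc a000 a001 a010 a011 a100 a101 a110 a111 b0 b1 r0 r1 d0 d1) (ev if1) (ev if1) (ev i) =
  - assoc (mkc a000 a001 a010 a011 a100 a101 a110 a111 b0 b1 r0 r1 d0 d1) (ev if1) (ev i) (ev if1).
  by move=> i hi; rewrite (rel1s Hb (hom_ev if1) (hom_ev if1) (hom_ev i)) // (negbTE hi).
have n1 : ie1 != if1 by []. have n2 : ie2 != if1 by [].
have A11 := alt Hb (hf n1) (hf n1). have A12 := alt Hb (hf n1) (hf n2).
have A21 := alt Hb (hf n2) (hf n1). have A22 := alt Hb (hf n2) (hf n2).
case: (boolP ((d0 == 0) && (d1 == 0) || (b0 == r0) && (b1 == r1))) => Cass.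
- left; apply: basis_assoc => i j l.
  case: (eqVneq i if1) => [->|hi]; case: (eqVneq j if1) => [->|hj]; case: (eqVneq l if1) => [->|hl].
  + exact: Ffff.
  + by rewrite Effe // Ffef // oppr0.
  + exact: Ffef.
  + exact: Ffee.
  + by rewrite Eeff // Ffef // oppr0.
  + exact: Fefe.
  + exact: Feef.
  + case: (evE hi) => ->; case: (evE hj) => ->; case: (evE hl) => ->;
    by [case: A11 | case: A12 | case: A21 | case: A22].
- right.
  have H : Hyps a000 a001 a010 a011 a100 a101 a110 a111 b0 b1 r0 r1 d0 d1.
    constructor.
    + fv (Feef ie1 ie1 n1 n1) if1.
    + fv (Feef ie1 ie2 n1 n2) if1.
    + fv (Feef ie2 ie1 n2 n1) if1.
    + fv (Feef ie2 ie2 n2 n2) if1.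
    + fv (Ffee ie1 ie1 n1 n1) if1.
    + fv (Ffee ie1 ie2 n1 n2) if1.
    + fv (Ffee ie2 ie1 n2 n1) if1.
    + fv (Ffee ie2 ie2 n2 n2) if1.
    + fv (Eeff ie1 n1) ie1.
    + fv (Eeff ie1 n1) ie2.
    + fv (Eeff ie2 n2) ie1.
    + fv (Eeff ie2 n2) ie2.
    + fv (Effe ie1 n1) ie1.
    + fv (Effe ie1 n1) ie2.
    + fv (Effe ie2 n2) ie1.
    + fv (Effe ie2 n2) ie2.
    + case: A22 => E _ _; fv E ie1.
    + case: A11 => E _ _; fv E ie2.
  move: Cass; rewrite negb_or !negb_and => /andP [ND NE].
  have [e0 [e1 He]] := exists_beta ND.
  case: (core2 H ND NE).
  + move=> [R0 [R1 [Ld [Bn [A0 [A1 [A2 [A3 [A4 [A5 [A6 A7]]]]]]]]]]].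
    subst r0 r1 a000 a001 a010 a011 a100 a101 a110 a111.
    left; exact: iso28 Ld He Bn.
  + move=> [B0 [B1 [Ld [Rn [A0 [A1 [A2 [A3 [A4 [A5 [A6 A7]]]]]]]]]]].
    subst b0 b1 a000 a001 a010 a011 a100 a101 a110 a111.
    right; exact: iso30 Ld He Rn.
Qed.

Theorem mainTheorem20 (c : sconst) :
  graded c -> binary_associative c ->
  associative_sa c \/ sa_iso c R28 \/ sa_iso c R30.
Proof.
move=> Hg Hb; have E := graded_mkc Hg.
rewrite E; apply: main_mkc; by rewrite -E.
Qed.
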